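(* Let $k$ be a field of characteristic $p>0$. Then the $k$-algebra $$\Lambda=kQ/\big(\beta^{6p+1},\ \alpha\gamma,\ \alpha(\beta+\beta^2)\gamma,\ \alpha\beta^{2p+1}\gamma\big)$$ (which equals $kQ/I(6p+1;6p+1,6p+1;V)$ with $V=(\beta^{6p+1})+k\cdot1+k(\beta+\beta^2)+k\beta^{2p+1}$) has ordinary quiver $Q$, containing the loop $\beta$, and satisfies $\mathrm{HH}^1(\Lambda)=0$.
   Context: $Q$ is the quiver with vertices $1,2,3$ and arrows $\alpha\colon 2\to1$, $\beta\colon 2\to 2$, $\gamma\colon 3\to 2$; $kQ$ is generated by pairwise orthogonal idempotents $e_1,e_2,e_3$ (sum $1$) and $\alpha,\beta,\gamma$ with $e_1\alpha=\alpha=\alpha e_2$, $e_2\beta=\beta=\beta e_2$, $e_3\gamma=\gamma=\gamma e_2$, $\gamma\alpha=\beta\alpha=\gamma\beta=0$; for $v=\sum_iv_i\beta^i\in k[\beta]$, $\alpha v\gamma=\sum_iv_i\alpha\beta^i\gamma$. $I(n;n,n;V)$ is the two-sided ideal generated by $\alpha\beta^n$, $\beta^n$, $\beta^n\gamma$ and all $\alpha v\gamma$, $v\in V$; the displayed ideal is the two-sided ideal generated by the listed elements. $\mathrm{HH}^1(\Lambda)=\mathrm{Der}_k(\Lambda,\Lambda)/\mathrm{Inn}(\Lambda)$. *)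

(* Defs.v *)
From HB Require Import structures.
From mathcomp Require Import all_boot all_order all_algebra.
Unset Printing Implicit Defensive.
Import Order.TTheory GRing.Theory Num.Theory.
Local Open Scope ring_scope.

(* Model of the path algebra kQ: Q has vertices 1,2,3 and arrows
   alpha : 2 -> 1, beta : 2 -> 2 (loop), gamma : 3 -> 2.
   Paths are composed right-to-left (e1 alpha = alpha = alpha e2,
   e2 gamma = gamma = gamma e3).  kQ is realised through its faithful
   representation in 3x3 matrices over k[x]: entry (j,i) of an element
   x is e_j x e_i, a k-combination of paths i -> j, where beta^n is
   recorded as x^n.  Indices 'I_3 = {0,1,2} correspond to vertices 1,2,3. *)

Definition Mx (k : fieldType) := 'M[{poly k}]_3.

Definition v1 : 'I_3 := @Ordinal 3 0 isT.
Definition v2 : 'I_3 := @Ordinal 3 1 isT.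
Definition v3 : 'I_3 := @Ordinal 3 2 isT.

(* the image of kQ: e1 kQ e1 = k e1, e2 kQ e2 = k[beta], e3 kQ e3 = k e3,
   e1 kQ e2 = alpha k[beta], e2 kQ e3 = k[beta] gamma,
   e1 kQ e3 = alpha k[beta] gamma, all other e_j kQ e_i = 0. *)
Definition in_kQ (k : fieldType) (A : Mx k) : Prop :=
  (forall i j : 'I_3, (j < i)%N -> A i j = 0) /\
  (size (A v1 v1) <= 1)%N /\ (size (A v3 v3) <= 1)%N.
Arguments in_kQ {k}.

Definition e1 (k : fieldType) : Mx k := delta_mx v1 v1.
Definition e2 (k : fieldType) : Mx k := delta_mx v2 v2.
Definition e3 (k : fieldType) : Mx k := delta_mx v3 v3.
Definition alpha (k : fieldType) : Mx k := delta_mx v1 v2.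
Definition beta (k : fieldType) : Mx k := 'X *: delta_mx v2 v2.
Definition gamma (k : fieldType) : Mx k := delta_mx v2 v3.

(* v(beta) in kQ for v in k[beta] (with beta^0 = e2) *)
Definition poly_beta (k : fieldType) (v : {poly k}) : Mx k := v *: delta_mx v2 v2.
Arguments poly_beta {k}.

Definition kscale (k : fieldType) (c : k) (x : Mx k) : Mx k := c%:P *: x.
Arguments kscale {k}.

Definition gen_ideal (k : fieldType) (S : Mx k -> Prop) (x : Mx k) : Prop :=
  exists n (a s b : 'I_n -> Mx k),
    (forall i, in_kQ (a i) /\ S (s i) /\ in_kQ (b i)) /\
    x = \sum_(i < n) a i * s i * b i.
Arguments gen_ideal {k}.

Definition arrow (k : fieldType) (i : 'I_3) : Mx k :=
  if val i == 0%N then alpha k else if val i == 1%N then beta k else gamma k.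

Definition arrow_ideal_pow (k : fieldType) (m : nat) : Mx k -> Prop :=
  gen_ideal (fun y => exists t : m.-tuple 'I_3, y = \prod_(i <- t) arrow k i).

(* I is admissible: R^m <= I <= R^2 for some m >= 2; then kQ/I has
   ordinary quiver Q. *)
Definition admissible (k : fieldType) (I : Mx k -> Prop) : Prop :=
  (forall x, I x -> arrow_ideal_pow k 2 x) /\
  exists m, (2 <= m)%N /\ forall x, arrow_ideal_pow k m x -> I x.

(* HH^1(kQ/I) = 0, i.e. every k-linear derivation of kQ/I is inner.
   A map D : kQ/I -> kQ/I is represented by a lift f : kQ -> kQ which is
   well defined modulo I. *)
Definition is_derivation_mod (k : fieldType) (I : Mx k -> Prop) (f : Mx k -> Mx k) : Prop :=
  (forall x, in_kQ x -> in_kQ (f x)) /\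
  (forall x y, in_kQ x -> in_kQ y -> I (x - y) -> I (f x - f y)) /\
  (forall (c : k) x y, in_kQ x -> in_kQ y ->
      I (f (kscale c x + y) - (kscale c (f x) + f y))) /\
  (forall x y, in_kQ x -> in_kQ y -> I (f (x * y) - (f x * y + x * f y))).

Definition is_inner_mod (k : fieldType) (I : Mx k -> Prop) (f : Mx k -> Mx k) : Prop :=
  exists a, in_kQ a /\ forall x, in_kQ x -> I (f x - (a * x - x * a)).

Definition HH1_vanishes (k : fieldType) (I : Mx k -> Prop) : Prop :=
  forall f, is_derivation_mod k I f -> is_inner_mod k I f.

Definition Lam_ideal (k : fieldType) (p : nat) : Mx k -> Prop :=
  gen_ideal (fun y => y = beta k ^+ (6 * p + 1) \/ y = alpha k * gamma k \/
      y = alpha k * (beta k + beta k ^+ 2) * gamma k \/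
      y = alpha k * beta k ^+ (2 * p + 1) * gamma k).

Definition V_sub (k : fieldType) (p : nat) (v : {poly k}) : Prop :=
  exists (q : {poly k}) (c1 c2 c3 : k),
    v = 'X ^+ (6 * p + 1) * q + c1%:P + c2 *: ('X + 'X ^+ 2) + c3 *: 'X ^+ (2 * p + 1).

Definition I_nnnV (k : fieldType) (n : nat) (V : {poly k} -> Prop) : Mx k -> Prop :=
  gen_ideal (fun y => y = alpha k * beta k ^+ n \/ y = beta k ^+ n \/
      y = beta k ^+ n * gamma k \/
      exists v, V v /\ y = alpha k * poly_beta v * gamma k).

(* Main.v *)
Require Import Defs.
From HB Require Import structures.
From mathcomp Require Import all_boot all_order all_algebra ring zify.
From Stdlib Require Import FunctionalExtensionality PropExtensionality.
Import GRing.Theory.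
Set Implicit Arguments. Unset Strict Implicit.
Local Open Scope ring_scope.

Ltac mxring := apply/matrixP => i j; rewrite ?(mxE, big_ord_recl, big_ord0); ring.


Section S.
Variable k : fieldType.

Definition M6 (a b c d e f : {poly k}) : Mx k := \matrix_(i < 3, j < 3)
  match nat_of_ord i, nat_of_ord j with
  | 0%N, 0%N => a | 0%N, 1%N => b | 0%N, 2%N => c | 1%N, 1%N => d | 1%N, 2%N => e | 2%N, 2%N => f | _, _ => 0 end.

Ltac m6tac := apply/matrixP; case=> [[|[|[|?]]] ?]; case=> [[|[|[|?]]] ?];
  rewrite ?(mxE, big_ord_recl, big_ord0) //=; ring.

Lemma M6_mul a b c d e f a' b' c' d' e' f' :
  M6 a b c d e f * M6 a' b' c' d' e' f' =
  M6 (a * a') (a * b' + b * d') (a * c' + b * e' + c * f') (d * d') (d * e' + e * f') (f * f').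
Proof. m6tac. Qed.

Lemma M6_add a b c d e f a' b' c' d' e' f' :
  M6 a b c d e f + M6 a' b' c' d' e' f' =
  M6 (a + a') (b + b') (c + c') (d + d') (e + e') (f + f').
Proof. m6tac. Qed.

Lemma M6_opp a b c d e f : - M6 a b c d e f = M6 (-a) (-b) (-c) (-d) (-e) (-f).
Proof. m6tac. Qed.

Lemma M6_scale (c0 : k) a b c d e f :
  kscale c0 (M6 a b c d e f) = M6 (c0%:P * a) (c0%:P * b) (c0%:P * c) (c0%:P * d) (c0%:P * e) (c0%:P * f).
Proof. rewrite /kscale; m6tac. Qed.

Lemma M6_0 : 0 = M6 0 0 0 0 0 0.
Proof. m6tac. Qed.
Lemma M6_1 : 1 = M6 1 0 0 1 0 1.
Proof. m6tac. Qed.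
Lemma e1_M6 : e1 k = M6 1 0 0 0 0 0.
Proof. rewrite /e1; m6tac. Qed.
Lemma e2_M6 : e2 k = M6 0 0 0 1 0 0.
Proof. rewrite /e2; m6tac. Qed.
Lemma e3_M6 : e3 k = M6 0 0 0 0 0 1.
Proof. rewrite /e3; m6tac. Qed.
Lemma alpha_M6 : alpha k = M6 0 1 0 0 0 0.
Proof. rewrite /alpha; m6tac. Qed.
Lemma beta_M6 : beta k = M6 0 0 0 'X 0 0.
Proof. rewrite /beta; m6tac. Qed.
Lemma gamma_M6 : gamma k = M6 0 0 0 0 1 0.
Proof. rewrite /gamma; m6tac. Qed.
Lemma pb_M6 v : poly_beta v = M6 0 0 0 v 0 0.
Proof. rewrite /poly_beta; m6tac. Qed.

Lemma M6_eq x : in_kQ x ->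
  x = M6 (x v1 v1) (x v1 v2) (x v1 v3) (x v2 v2) (x v2 v3) (x v3 v3).
Proof.
case=> hl _; apply/matrixP=> i j; rewrite mxE.
case: i => [[|[|[|i]]] Hi] //; case: j => [[|[|[|j]]] Hj] //=;
  try (by congr (x _ _); apply: val_inj);
  by rewrite hl.
Qed.

Lemma kQ_M6 x : in_kQ x -> exists a b c d e f, x = M6 a b c d e f.
Proof. by move=> /M6_eq ->; do 6 eexists. Qed.

Lemma M6E a b c d e f :
  [/\ M6 a b c d e f v1 v1 = a, M6 a b c d e f v1 v2 = b, M6 a b c d e f v1 v3 = c,
      M6 a b c d e f v2 v2 = d & (M6 a b c d e f v2 v3 = e /\ M6 a b c d e f v3 v3 = f)].
Proof. by rewrite !mxE. Qed.

Lemma kQ_M6E a b c d e f : in_kQ (M6 a b c d e f) <-> (size a <= 1)%N /\ (size f <= 1)%N.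
Proof.
rewrite /in_kQ !mxE /=; split; first by case=> _ [].
case=> ha hf; split=> //; move=> i j; rewrite mxE.
case: i => [[|[|[|i]]] Hi] //; case: j => [[|[|[|j]]] Hj] //=.
Qed.

End S.

Section S.
Variable k : fieldType.
Variable p : nat.
Implicit Types x y : Mx k.

Definition dvn (s : {poly k}) := exists q, s = 'X^(6 * p + 1) * q.
Local Notation V := (V_sub k p).

Lemma dvn_eq s t : dvn s -> t = s -> dvn t.
Proof. by move=> h ->. Qed.
Lemma dvn0 : dvn 0.
Proof. by exists 0; rewrite mulr0. Qed.
Lemma dvnD s t : dvn s -> dvn t -> dvn (s + t).
Proof. by move=> [q ->] [q' ->]; exists (q + q'); ring. Qed.
Lemma dvnN s : dvn s -> dvn (- s).
Proof. by move=> [q ->]; exists (- q); ring. Qed.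
Lemma dvnM r s : dvn s -> dvn (r * s).
Proof. by move=> [q ->]; exists (r * q); ring. Qed.
Lemma dvnX q : dvn ('X^(6 * p + 1) * q).
Proof. by exists q. Qed.

Lemma V_E v : V v <-> exists q c1 c2 c3,
  v = 'X^(6 * p + 1) * q + c1%:P + c2%:P * ('X + 'X^2) + c3%:P * 'X^(2 * p + 1).
Proof. by rewrite /V_sub; split; case=> q [c1 [c2 [c3 ->]]]; exists q, c1, c2, c3; rewrite !mul_polyC. Qed.

Lemma V_eq s t : V s -> t = s -> V t.
Proof. by move=> h ->. Qed.
Lemma VD s t : V s -> V t -> V (s + t).
Proof.
move=> /V_E [q [c1 [c2 [c3 ->]]]] /V_E [q' [c1' [c2' [c3' ->]]]]; apply/V_E.
exists (q + q'), (c1 + c1'), (c2 + c2'), (c3 + c3'); rewrite !polyCD; ring.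
Qed.
Lemma VC c s : V s -> V (c%:P * s).
Proof.
move=> /V_E [q [c1 [c2 [c3 ->]]]]; apply/V_E.
exists (c%:P * q), (c * c1), (c * c2), (c * c3); rewrite !polyCM; ring.
Qed.
Lemma VN s : V s -> V (- s).
Proof. move=> /(VC (-1)) h; apply: (V_eq h); rewrite polyCN polyC1; ring. Qed.
Lemma V_dvn s : dvn s -> V s.
Proof. by move=> [q ->]; apply/V_E; exists q, 0, 0, 0; rewrite !polyC0; ring. Qed.
Lemma V0 : V 0.
Proof. exact: (V_dvn dvn0). Qed.
Lemma V1 : V 1.
Proof. by apply/V_E; exists 0, 1, 0, 0; rewrite !polyC0 polyC1; ring. Qed.
Lemma VXX : V ('X + 'X^2).
Proof. by apply/V_E; exists 0, 0, 1, 0; rewrite !polyC0 polyC1; ring. Qed.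
Lemma VX2p : V ('X^(2 * p + 1)).
Proof. by apply/V_E; exists 0, 0, 0, 1; rewrite !polyC0 polyC1; ring. Qed.

Definition J (x : Mx k) := in_kQ x /\ x v1 v1 = 0 /\ x v3 v3 = 0 /\ dvn (x v1 v2) /\
  dvn (x v2 v2) /\ dvn (x v2 v3) /\ V (x v1 v3).

Lemma J_M6 a b c d e f : J (M6 a b c d e f) <-> [/\ a = 0, f = 0, dvn b, V c & dvn d /\ dvn e].
Proof.
rewrite /J kQ_M6E; have [-> -> -> -> [-> ->]] := M6E a b c d e f; split.
  by case=> _ [-> [-> [? [? [? ?]]]]].
by case=> -> -> ? ? [? ?]; rewrite size_poly0.
Qed.

Lemma J_kQ x : J x -> in_kQ x.
Proof. by case. Qed.

Lemma J_M6ex x : J x -> exists b c d e, x = M6 0 b c d e 0 /\ [/\ dvn b, V c, dvn d & dvn e].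
Proof.
move=> hx; have [a [b [c [d [e [f ex]]]]]] := kQ_M6 (J_kQ hx).
move: hx; rewrite ex J_M6; case=> -> -> ? ? [? ?]; by exists b, c, d, e.
Qed.

Lemma size_le1 (a : {poly k}) : (size a <= 1)%N -> a = (a`_0)%:P.
Proof. exact: size1_polyC. Qed.

Lemma J0 : J 0.
Proof. rewrite (M6_0 k) J_M6; split=> //; try split; by [exact: dvn0 | exact: V0]. Qed.

Lemma JD x y : J x -> J y -> J (x + y).
Proof.
move=> /J_M6ex [b [c [d [e [-> [? ? ? ?]]]]]] /J_M6ex [b' [c' [d' [e' [-> [? ? ? ?]]]]]].
rewrite M6_add J_M6; split; rewrite ?addr0 //; try split; by [apply: dvnD | apply: VD].
Qed.

Lemma JN x : J x -> J (- x).
Proof.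
move=> /J_M6ex [b [c [d [e [-> [? ? ? ?]]]]]].
rewrite M6_opp J_M6; split; rewrite ?oppr0 //; try split; by [apply: dvnN | apply: VN].
Qed.

Lemma JB x y : J x -> J y -> J (x - y).
Proof. by move=> hx hy; apply: JD hx (JN hy). Qed.

Lemma JMl a x : in_kQ a -> J x -> J (a * x).
Proof.
move=> ha /J_M6ex [b [c [d [e [-> [? ? ? ?]]]]]].
rewrite (M6_eq ha) M6_mul J_M6.
set a0 := a v1 v1.
have ha0 : a0 = (a0`_0)%:P by apply: size_le1; case: ha => _ [].
split; rewrite ?mulr0 ?add0r ?addr0 //.
- by apply: dvnD; apply: dvnM.
- by apply: VD; [rewrite ha0; apply: VC | apply: V_dvn; apply: dvnM].
- by split; apply: dvnM.
Qed.

Lemma JMr x a : J x -> in_kQ a -> J (x * a).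
Proof.
move=> /J_M6ex [b [c [d [e [-> [? ? ? ?]]]]]] ha.
rewrite (M6_eq ha) M6_mul J_M6.
set a5 := a v3 v3.
have ha5 : a5 = (a5`_0)%:P by apply: size_le1; case: ha => _ [].
split; rewrite ?mul0r ?add0r ?addr0 //.
- by rewrite mulrC; apply: dvnM.
- apply: VD; first by rewrite mulrC; apply: V_dvn; apply: dvnM.
  by rewrite mulrC ha5; apply: VC.
- by split; [|apply: dvnD]; rewrite mulrC; apply: dvnM.
Qed.

Lemma sz_add (a b : {poly k}) : (size a <= 1)%N -> (size b <= 1)%N -> (size (a + b)%R <= 1)%N.
Proof. by move=> /size_le1 -> /size_le1 ->; rewrite -polyCD size_polyC_leq1. Qed.
Lemma sz_mul (a b : {poly k}) : (size a <= 1)%N -> (size b <= 1)%N -> (size (a * b)%R <= 1)%N.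
Proof. by move=> /size_le1 -> /size_le1 ->; rewrite -polyCM size_polyC_leq1. Qed.
Lemma sz_opp (a : {poly k}) : (size a <= 1)%N -> (size (- a)%R <= 1)%N.
Proof. by move=> /size_le1 ->; rewrite -polyCN size_polyC_leq1. Qed.
Lemma sz_C (c : k) : (size c%:P <= 1)%N.
Proof. exact: size_polyC_leq1. Qed.
Lemma sz_0 : (size (0 : {poly k})%R <= 1)%N.
Proof. by rewrite size_poly0. Qed.
Lemma sz_1 : (size (1 : {poly k})%R <= 1)%N.
Proof. by rewrite size_poly1. Qed.

Lemma kQ_add x y : in_kQ x -> in_kQ y -> in_kQ (x + y).
Proof.
move=> /[dup] hx /M6_eq -> /[dup] hy /M6_eq ->; rewrite M6_add kQ_M6E.
by case: hx => _ [? ?]; case: hy => _ [? ?]; split; apply: sz_add.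
Qed.
Lemma kQ_opp x : in_kQ x -> in_kQ (- x).
Proof.
move=> /[dup] hx /M6_eq ->; rewrite M6_opp kQ_M6E.
by case: hx => _ [? ?]; split; apply: sz_opp.
Qed.
Lemma kQ_mul x y : in_kQ x -> in_kQ y -> in_kQ (x * y).
Proof.
move=> /[dup] hx /M6_eq -> /[dup] hy /M6_eq ->; rewrite M6_mul kQ_M6E.
by case: hx => _ [? ?]; case: hy => _ [? ?]; split; apply: sz_mul.
Qed.
Lemma kQ_scale c x : in_kQ x -> in_kQ (kscale c x).
Proof.
move=> /[dup] hx /M6_eq ->; rewrite M6_scale kQ_M6E.
by case: hx => _ [? ?]; split; apply: sz_mul => //; apply: sz_C.
Qed.
Lemma kQ_B x y : in_kQ x -> in_kQ y -> in_kQ (x - y).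
Proof. by move=> hx hy; apply: kQ_add hx (kQ_opp hy). Qed.

Lemma kQ_0 : in_kQ (0 : Mx k).
Proof. by rewrite (M6_0 k) kQ_M6E; split; apply: sz_0. Qed.
Lemma kQ_1 : in_kQ (1 : Mx k).
Proof. by rewrite (M6_1 k) kQ_M6E; split; apply: sz_1. Qed.
Lemma kQ_e1 : in_kQ (e1 k).
Proof. by rewrite e1_M6 kQ_M6E; split; [apply: sz_1 | apply: sz_0]. Qed.
Lemma kQ_e2 : in_kQ (e2 k).
Proof. by rewrite e2_M6 kQ_M6E; split; apply: sz_0. Qed.
Lemma kQ_e3 : in_kQ (e3 k).
Proof. by rewrite e3_M6 kQ_M6E; split; [apply: sz_0 | apply: sz_1]. Qed.
Lemma kQ_alpha : in_kQ (alpha k).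
Proof. by rewrite alpha_M6 kQ_M6E; split; apply: sz_0. Qed.
Lemma kQ_beta : in_kQ (beta k).
Proof. by rewrite beta_M6 kQ_M6E; split; apply: sz_0. Qed.
Lemma kQ_gamma : in_kQ (gamma k).
Proof. by rewrite gamma_M6 kQ_M6E; split; apply: sz_0. Qed.
Lemma kQ_pb (v : {poly k}) : in_kQ (poly_beta v).
Proof. by rewrite pb_M6 kQ_M6E; split; apply: sz_0. Qed.

Lemma JS (c : k) x : J x -> J (kscale c x).
Proof.
move=> hx; have -> : kscale c x = kscale c 1 * x by rewrite /kscale -scalerAl mul1r.
by apply: JMl => //; apply: kQ_scale; apply: kQ_1.
Qed.

Lemma J_M6' b c d e : dvn b -> V c -> dvn d -> dvn e -> J (M6 0 b c d e 0).
Proof. by move=> *; rewrite J_M6. Qed.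

End S.
Arguments kQ_0 {k}. Arguments kQ_1 {k}. Arguments kQ_e1 {k}. Arguments kQ_e2 {k}. Arguments kQ_e3 {k}.
Arguments kQ_alpha {k}. Arguments kQ_beta {k}. Arguments kQ_gamma {k}. Arguments J0 {k p}.
Arguments dvn0 {k p}. Arguments V0 {k p}. Arguments V1 {k p}. Arguments VXX {k p}. Arguments VX2p {k p}.
Arguments dvnX {k p}.

Section S.
Variable k : fieldType.
Implicit Types x y : Mx k.

Definition catf T n m (a : 'I_n -> T) (b : 'I_m -> T) : 'I_(n + m) -> T :=
  fun i => match split i with inl j => a j | inr j => b j end.

Lemma catf_l T n m (a : 'I_n -> T) (b : 'I_m -> T) i : catf a b (lshift m i) = a i.
Proof. by rewrite /catf (unsplitK (inl i : 'I_n + 'I_m)). Qed.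
Lemma catf_r T n m (a : 'I_n -> T) (b : 'I_m -> T) i : catf a b (rshift n i) = b i.
Proof. by rewrite /catf (unsplitK (inr i : 'I_n + 'I_m)). Qed.

Lemma gen_add (S : Mx k -> Prop) x y : gen_ideal S x -> gen_ideal S y -> gen_ideal S (x + y).
Proof.
case=> n [a [s [b [h ->]]]] [m [a' [s' [b' [h' ->]]]]].
exists (n + m)%N, (catf a a'), (catf s s'), (catf b b'); split.
  by move=> i; rewrite /catf; case: (split i).
by rewrite big_split_ord /=; congr (_ + _); apply: eq_bigr => i _; rewrite ?catf_l ?catf_r.
Qed.

Lemma gen_single (S : Mx k -> Prop) a s b : in_kQ a -> S s -> in_kQ b -> gen_ideal S (a * s * b).
Proof.
move=> ha hs hb; exists 1%N, (fun _ => a), (fun _ => s), (fun _ => b); split=> //.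
by rewrite big_ord1.
Qed.

Lemma gen_eq (S : Mx k -> Prop) x y : gen_ideal S y -> x = y -> gen_ideal S x.
Proof. by move=> h ->. Qed.

Variable p : nat.
Local Notation J := (J p).

Lemma gen_sub (S : Mx k -> Prop) x : (forall y, S y -> J y) -> gen_ideal S x -> J x.
Proof.
move=> hS [n [a [s [b [h ->]]]]].
apply: (big_ind J); [exact: J0 | exact: JD |] => i _.
have [ha [hs hb]] := h i.
exact: (JMr (JMl ha (hS _ hs)) hb).
Qed.

Lemma pb_mul u v : poly_beta u * poly_beta v = poly_beta (u * v) :> Mx k.
Proof. by rewrite !pb_M6 M6_mul; congr M6; ring. Qed.

Lemma beta_pow m : beta k ^+ m.+1 = poly_beta ('X^(m.+1)).
Proof.
elim: m => [|m IH]; first by rewrite expr1 /beta /poly_beta expr1.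
by rewrite exprS IH {1}/beta -/(poly_beta 'X) pb_mul -exprS.
Qed.

Lemma kQ_decomp x : in_kQ x -> x =
  kscale ((x v1 v1)`_0) (e1 k) + alpha k * poly_beta (x v1 v2) + alpha k * poly_beta (x v1 v3) * gamma k
  + poly_beta (x v2 v2) + poly_beta (x v2 v3) * gamma k + kscale ((x v3 v3)`_0) (e3 k).
Proof.
move=> hx; have h0 : x v1 v1 = ((x v1 v1)`_0)%:P by apply: size_le1; case: hx => _ [].
have h3 : x v3 v3 = ((x v3 v3)`_0)%:P by apply: size_le1; case: hx => _ [].
rewrite {1}(M6_eq hx) e1_M6 e3_M6 alpha_M6 gamma_M6 !pb_M6 !M6_mul !M6_scale !M6_add.
by rewrite {1}h0 {1}h3; congr M6; ring.
Qed.

Lemma J_decomp x : J x -> x =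
  alpha k * poly_beta (x v1 v2) + alpha k * poly_beta (x v1 v3) * gamma k
  + poly_beta (x v2 v2) + poly_beta (x v2 v3) * gamma k.
Proof.
move=> /[dup] hx [hk [h0 [h3 _]]]; rewrite {1}(kQ_decomp hk) h0 h3 coefE /kscale !scale0r.
by rewrite add0r addr0.
Qed.
End S.

Section S.
Variable k : fieldType.
Implicit Types x y : Mx k.
Variable p : nat.
Hypothesis p1 : (1 <= p)%N.
Local Notation J := (J p).
Local Notation V := (V_sub k p).

Lemma beta_n : beta k ^+ (6 * p + 1) = poly_beta 'X^(6 * p + 1).
Proof. by rewrite addn1 beta_pow. Qed.
Lemma beta_2p : beta k ^+ (2 * p + 1) = poly_beta 'X^(2 * p + 1).
Proof. by rewrite addn1 beta_pow. Qed.
Lemma beta_2 : beta k ^+ 2 = poly_beta 'X^2.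
Proof. by rewrite beta_pow. Qed.

Lemma M6_congr a b c d e f a' b' c' d' e' f' : a = a' -> b = b' -> c = c' -> d = d' -> e = e' -> f = f' ->
  M6 a b c d e f = M6 a' b' c' d' e' f' :> Mx k.
Proof. by move=> -> -> -> -> -> ->. Qed.

Ltac m6 := rewrite ?beta_n ?beta_2p ?beta_2 ?e1_M6 ?e2_M6 ?e3_M6 ?alpha_M6 ?beta_M6 ?gamma_M6 ?pb_M6 ?M6_1
   ?(M6_mul, M6_add, M6_opp, M6_scale); apply: M6_congr; ring.

Lemma J_lam_gens y : (y = beta k ^+ (6 * p + 1) \/ y = alpha k * gamma k \/
      y = alpha k * (beta k + beta k ^+ 2) * gamma k \/
      y = alpha k * beta k ^+ (2 * p + 1) * gamma k) -> J y.
Proof.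
case=> [->|[->|[->|->]]].
- have -> : beta k ^+ (6 * p + 1) = M6 0 0 0 ('X^(6 * p + 1) * 1) 0 0.
  rewrite ?beta_n ?beta_2p ?beta_2 ?e1_M6 ?e2_M6 ?e3_M6 ?alpha_M6 ?beta_M6 ?gamma_M6 ?pb_M6 ?M6_1.
  apply: M6_congr; ring.
  by apply: J_M6'; [exact: dvn0 | exact: V0 | exact: dvnX | exact: dvn0].
- have -> : alpha k * gamma k = M6 0 0 1 0 0 0 by m6.
  by apply: J_M6'; [exact: dvn0 | exact: V1 | exact: dvn0 | exact: dvn0].
- have -> : alpha k * (beta k + beta k ^+ 2) * gamma k = M6 0 0 ('X + 'X^2) 0 0 0 by m6.
  by apply: J_M6'; [exact: dvn0 | exact: VXX | exact: dvn0 | exact: dvn0].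
- have -> : alpha k * beta k ^+ (2 * p + 1) * gamma k = M6 0 0 ('X^(2 * p + 1)) 0 0 0 by m6.
  by apply: J_M6'; [exact: dvn0 | exact: VX2p | exact: dvn0 | exact: dvn0].
Qed.

Lemma Lam_J x : Lam_ideal k p x <-> J x.
Proof.
split; first by apply: gen_sub; exact: J_lam_gens.
move=> hx; rewrite (J_decomp hx) /Lam_ideal.
case: hx => _ [_ [_ [[q1 ->] [[q2 ->] [[q3 ->] /V_E [q [c1 [c2 [c3 ->]]]]]]]]].
apply: gen_add; first apply: gen_add; first apply: gen_add.
- apply: (gen_eq (gen_single kQ_alpha _ (kQ_pb q1))); first by left.
  by m6.
- apply: (gen_eq (gen_add (gen_add (gen_add
      (gen_single (kQ_mul kQ_alpha (kQ_pb q)) _ (kQ_gamma))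
      (gen_single (kQ_scale c1 kQ_e1) _ kQ_1))
      (gen_single (kQ_scale c2 kQ_e1) _ kQ_1))
      (gen_single (kQ_scale c3 kQ_e1) _ kQ_1))).
  + by left.
  + by right; left.
  + by right; right; left.
  + by right; right; right.
  by m6.
- apply: (gen_eq (gen_single (kQ_pb q2) _ kQ_1)); first by left.
  by m6.
- apply: (gen_eq (gen_single kQ_1 _ (kQ_mul (kQ_pb q3) kQ_gamma))); first by left.
  by m6.
Qed.

Lemma I_J x : I_nnnV k (6 * p + 1) V x <-> J x.
Proof.
split.
  apply: gen_sub => y [->|[->|[->|[v [hv ->]]]]].
  - have -> : alpha k * beta k ^+ (6 * p + 1) = M6 0 ('X^(6 * p + 1) * 1) 0 0 0 0 by m6.
    by apply: J_M6'; [exact: dvnX | exact: V0 | exact: dvn0 | exact: dvn0].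
  - have -> : beta k ^+ (6 * p + 1) = M6 0 0 0 ('X^(6 * p + 1) * 1) 0 0 by m6.
    by apply: J_M6'; [exact: dvn0 | exact: V0 | exact: dvnX | exact: dvn0].
  - have -> : beta k ^+ (6 * p + 1) * gamma k = M6 0 0 0 0 ('X^(6 * p + 1) * 1) 0 by m6.
    by apply: J_M6'; [exact: dvn0 | exact: V0 | exact: dvn0 | exact: dvnX].
  - have -> : alpha k * poly_beta v * gamma k = M6 0 0 v 0 0 0 by m6.
    by apply: J_M6'; [exact: dvn0 | exact: hv | exact: dvn0 | exact: dvn0].
move=> hx; rewrite (J_decomp hx) /I_nnnV.
case: hx => _ [_ [_ [[q1 ->] [[q2 ->] [[q3 ->] hv]]]]].
apply: gen_add; first apply: gen_add; first apply: gen_add.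
- apply: (gen_eq (gen_single kQ_1 _ (kQ_pb q1))); first by left.
  by m6.
- apply: (gen_eq (gen_single kQ_1 _ kQ_1)).
    by right; right; right; exists (x v1 v3); split.
  by m6.
- apply: (gen_eq (gen_single (kQ_pb q2) _ kQ_1)); first by right; left.
  by m6.
- apply: (gen_eq (gen_single (kQ_pb q3) _ kQ_1)); first by right; right; left.
  by m6.
Qed.

Lemma path2 (i j : 'I_3) : exists t : 2.-tuple 'I_3, arrow k i * arrow k j = \prod_(l <- t) arrow k l.
Proof. by exists [tuple i; j]; rewrite /= !big_cons big_nil mulr1. Qed.

Lemma arrowE : [/\ arrow k v1 = alpha k, arrow k v2 = beta k & arrow k v3 = gamma k].
Proof. by []. Qed.

Lemma J_R2 x : J x -> arrow_ideal_pow k 2 x.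
Proof.
move=> hx; rewrite (J_decomp hx) /arrow_ideal_pow.
case: hx => _ [_ [_ [[q1 ->] [[q2 ->] [[q3 ->] /V_E [q [c1 [c2 [c3 ->]]]]]]]]].
have eX : 'X^(6 * p + 1) = 'X * 'X * 'X^(6 * p - 1) :> {poly k}.
  by rewrite -expr2 -exprD; congr (_ ^+ _); lia.
have eX2 : 'X^(2 * p + 1) = 'X * 'X^(2 * p) :> {poly k}.
  by rewrite addn1 exprS.
have [a12 ea12] := path2 v1 v2.
have [a13 ea13] := path2 v1 v3.
have [a22 ea22] := path2 v2 v2.
have [a23 ea23] := path2 v2 v3.
apply: gen_add; first apply: gen_add; first apply: gen_add.
- apply: (gen_eq (gen_single kQ_1 _ (kQ_pb ('X * 'X^(6 * p - 1) * q1)))); first by exists a12.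
  rewrite -ea12 /arrow /= eX; by m6.
- apply: (gen_eq (gen_add (gen_single (kQ_scale c1 kQ_e1) _ kQ_1)
     (gen_single kQ_1 _ (kQ_mul (kQ_pb ('X * 'X^(6 * p - 1) * q + c2%:P * (1 + 'X)
        + c3%:P * 'X^(2 * p))) kQ_gamma)))).
  + by exists a13.
  + by exists a12.
  rewrite -ea13 -ea12 /arrow /= eX eX2; by m6.
- apply: (gen_eq (gen_single kQ_1 _ (kQ_pb ('X^(6 * p - 1) * q2)))); first by exists a22.
  rewrite -ea22 /arrow /= eX; by m6.
- apply: (gen_eq (gen_single (kQ_pb ('X * 'X^(6 * p - 1) * q3)) _ kQ_1)); first by exists a23.
  rewrite -ea23 /arrow /= eX; by m6.
Qed.

Lemma path_shape m (s : seq 'I_3) : size s = m.+1 -> exists q1 q2 q3 q4,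
  \prod_(l <- s) arrow k l = M6 0 ('X^m * q2) ('X^(m.-1) * q4) ('X^(m.+1) * q1) ('X^m * q3) 0.
Proof.
elim: m s => [|m IH] [|i s] //=.
  case: s => [_|? ? /eqP //]; rewrite big_cons big_nil mulr1.
  case: i => [[|[|[|?]]] ?] //; rewrite /arrow /=.
  - by exists 0, 1, 0, 0; m6.
  - by exists 1, 0, 0, 0; m6.
  - by exists 0, 0, 1, 0; m6.
case=> /IH [q1 [q2 [q3 [q4 e]]]]; rewrite big_cons e.
case: i => [[|[|[|?]]] ?] //; rewrite /arrow /=.
- exists 0, q1, 0, q3; m6.
- exists q1, 0, q3, 0; rewrite !exprS; m6.
- exists 0, 0, 0, 0; m6.
Qed.

Lemma R_J x : arrow_ideal_pow k (6 * p + 3) x -> J x.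
Proof.
apply: gen_sub => y [t ->].
have [q1 [q2 [q3 [q4 ->]]]] := path_shape (m := (6 * p + 2)%N) (s := t) (etrans (size_tuple t) (addnS _ _)).
have e : forall r, 'X^(6 * p + 1 + r) = 'X^(6 * p + 1) * 'X^r :> {poly k} by move=> r; rewrite exprD.
apply: J_M6'.
- apply: (dvn_eq (dvnX ('X * q2))); rewrite (_ : (6 * p + 2)%N = (6 * p + 1 + 1)%N); last lia.
  by rewrite e; ring.
- by apply: V_dvn; apply: (dvn_eq (dvnX q4)); congr (_ ^+ _ * _); lia.
- apply: (dvn_eq (dvnX ('X^2 * q1))); rewrite (_ : (6 * p + 2).+1 = (6 * p + 1 + 2)%N); last lia.
  by rewrite e; ring.
- apply: (dvn_eq (dvnX ('X * q3))); rewrite (_ : (6 * p + 2)%N = (6 * p + 1 + 1)%N); last lia.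
  by rewrite e; ring.
Qed.

End S.


Section S.
Variable k : fieldType.
Implicit Types x y z a : Mx k.
Variable p : nat.
Local Notation J := (J p).
Local Notation V := (V_sub k p).

Definition eqv x y := J (x - y).

Lemma J_eqv x y : J x -> eqv x y -> J y.
Proof. rewrite /eqv.  move=> hx hxy; have -> : y = x - (x - y) by mxring. exact: JB. Qed.
Lemma eqv_J x y : eqv x y -> J y -> J x.
Proof. rewrite /eqv.  move=> hxy hy; have -> : x = (x - y) + y by mxring. exact: JD. Qed.
Lemma eqv_trans y x z : eqv x y -> eqv y z -> eqv x z.
Proof. rewrite /eqv.  move=> h1 h2; have -> : x - z = (x - y) + (y - z) by mxring. exact: JD. Qed.
Lemma eqv_sym x y : eqv x y -> eqv y x.
Proof. rewrite /eqv.  move=> h; have -> : y - x = - (x - y) by mxring. exact: JN. Qed.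
Lemma eqv_refl x : eqv x x.
Proof. by rewrite /eqv subrr; apply: J0. Qed.
Lemma eqv_eq x y : x = y -> eqv x y.
Proof. by move=> ->; apply: eqv_refl. Qed.
Lemma eqv_add x y x' y' : eqv x x' -> eqv y y' -> eqv (x + y) (x' + y').
Proof. rewrite /eqv.  move=> h1 h2; have -> : x + y - (x' + y') = (x - x') + (y - y') by mxring. exact: JD. Qed.
Lemma eqv_opp x x' : eqv x x' -> eqv (- x) (- x').
Proof. rewrite /eqv.  move=> h1; have -> : - x - - x' = - (x - x') by mxring. exact: JN. Qed.
Lemma eqv_mull a x y : in_kQ a -> eqv x y -> eqv (a * x) (a * y).
Proof. rewrite /eqv.  move=> ha h; have -> : a * x - a * y = a * (x - y) by mxring. exact: JMl. Qed.
Lemma eqv_mulr a x y : in_kQ a -> eqv x y -> eqv (x * a) (y * a).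
Proof. rewrite /eqv.  move=> ha h; have -> : x * a - y * a = (x - y) * a by mxring. exact: JMr. Qed.
Lemma eqv_sc (c : k) x y : eqv x y -> eqv (kscale c x) (kscale c y).
Proof. rewrite /eqv.  move=> h; have -> : kscale c x - kscale c y = kscale c (x - y) by rewrite /kscale; mxring. exact: JS. Qed.
Lemma eqv0 x : eqv x 0 <-> J x.
Proof. by rewrite /eqv subr0. Qed.

Section Der.
Variable g : Mx k -> Mx k.
Hypothesis hg : is_derivation_mod k J g.

Lemma g_kQ x : in_kQ x -> in_kQ (g x).
Proof. by case: hg => h _; apply: h. Qed.

Lemma g0 : J (g 0).
Proof.
case: hg => _ [_ [hl _]]; have := hl 1 0 0 kQ_0 kQ_0.
rewrite /kscale polyC1 !scale1r addr0 => h.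
have -> : g 0 = - (g 0 - (g 0 + g 0)) by mxring.
exact: JN.
Qed.

Lemma g_add x y : in_kQ x -> in_kQ y -> eqv (g (x + y)) (g x + g y).
Proof.
case: hg => _ [_ [hl _]] hx hy; have := hl 1 x y hx hy.
by rewrite /kscale polyC1 !scale1r.
Qed.

Lemma g_sc (c : k) x : in_kQ x -> eqv (g (kscale c x)) (kscale c (g x)).
Proof.
case: hg => _ [_ [hl _]] hx; have := hl c x 0 hx kQ_0.
rewrite addr0 => h; apply: (eqv_trans h); rewrite /eqv.
have -> : kscale c (g x) + g 0 - kscale c (g x) = g 0 by mxring.
exact: g0.
Qed.

Lemma g_mul x y : in_kQ x -> in_kQ y -> eqv (g (x * y)) (g x * y + x * g y).
Proof. by case: hg => _ [_ [_ hm]]; apply: hm. Qed.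

Lemma g_J x : in_kQ x -> J x -> J (g x).
Proof.
case: hg => _ [hw _] hx hJ.
have := hw x 0 hx kQ_0; rewrite subr0 => /(_ hJ) h.
have -> : g x = (g x - g 0) + g 0 by mxring.
apply: JD h g0.
Qed.

Lemma g_wd x y : in_kQ x -> in_kQ y -> eqv x y -> eqv (g x) (g y).
Proof. by case: hg => _ [hw _]; apply: hw. Qed.

End Der.

Definition subad (g : Mx k -> Mx k) a := fun x => g x - (a * x - x * a).

Lemma subad_der g a : is_derivation_mod k J g -> in_kQ a -> is_derivation_mod k J (subad g a).
Proof.
move=> hg ha; split; [|split; [|split]].
- move=> x hx; rewrite /subad; apply: kQ_B; first exact: g_kQ.
  by apply: kQ_B; apply: kQ_mul.
- move=> x y hx hy hxy; rewrite /subad.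
  have -> : g x - (a * x - x * a) - (g y - (a * y - y * a)) =
     (g x - g y) - (a * (x - y) - (x - y) * a) by mxring.
  apply: JB; first exact: (g_wd hg).
  by apply: JB; [apply: JMl | apply: JMr].
- move=> c x y hx hy; rewrite /subad.
  have := (g_add hg (kQ_scale c hx) hy); have := g_sc hg c hx => h1 h2.
  have e : g (kscale c x + y) - (a * (kscale c x + y) - (kscale c x + y) * a) -
     (kscale c (g x - (a * x - x * a)) + (g y - (a * y - y * a))) =
     (g (kscale c x + y) - (g (kscale c x) + g y)) + ((g (kscale c x)) - kscale c (g x)).
    rewrite /kscale; mxring.
  by rewrite e; apply: JD.
- move=> x y hx hy; rewrite /subad.
  have e : g (x * y) - (a * (x * y) - x * y * a) -
     ((g x - (a * x - x * a)) * y + x * (g y - (a * y - y * a))) =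
     g (x * y) - (g x * y + x * g y) by mxring.
  by rewrite e; apply: (g_mul hg).
Qed.

Lemma subad_comp g a b x : subad (subad g a) b x = subad g (a + b) x.
Proof. rewrite /subad; mxring. Qed.


Ltac m6s := rewrite ?addr0 ?add0r ?e1_M6 ?e2_M6 ?e3_M6 ?alpha_M6 ?beta_M6 ?gamma_M6 ?pb_M6 ?M6_1
   ?(M6_mul, M6_add, M6_opp, M6_scale).
Ltac m6s_in H := rewrite ?e1_M6 ?e2_M6 ?e3_M6 ?alpha_M6 ?beta_M6 ?gamma_M6 ?pb_M6 ?M6_1
   ?(M6_mul, M6_add, M6_opp, M6_scale) in H.
Ltac m6 := m6s; try rewrite [RHS](M6_0 k); f_equal; ring.

Lemma eq0_by (c : {poly k}) {E G : {poly k}} : E = 0 -> G = c * E -> G = 0.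
Proof. by move=> -> ->; rewrite mulr0. Qed.

Ltac close := first [ ring | match goal with
  | |- _ = 0 => match goal with H : _ = 0 |- _ =>
        first [apply: (@eq0_by 1 _ _ H); ring | apply: (@eq0_by (-1) _ _ H); ring] end
  | |- dvn _ _ => first [ apply: (dvn_eq dvn0); ring | match goal with H : dvn _ _ |- _ =>
        first [apply: (dvn_eq H); ring | apply: (dvn_eq (dvnN H)); ring] end ]
  | |- V_sub _ _ _ => first [ apply: (V_eq V0); ring | match goal with H : V_sub _ _ _ |- _ =>
        first [apply: (V_eq H); ring | apply: (V_eq (VN H)); ring] end ] end ].



Lemma Lidem g x y z : is_derivation_mod k J g -> in_kQ x -> in_kQ y -> x * y = z ->
  J (g z - (g x * y + x * g y)).
Proof. move=> hg hx hy <-; exact: (g_mul hg hx hy). Qed.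

Lemma Lzero g x y : is_derivation_mod k J g -> in_kQ x -> in_kQ y -> x * y = 0 ->
  J (g x * y + x * g y).
Proof.
move=> hg hx hy e; have := g_mul hg hx hy; rewrite e => h.
exact: (J_eqv (g0 hg) h).
Qed.

Lemma stage1 g : is_derivation_mod k J g -> exists a, in_kQ a /\
  J (subad g a (e1 k)) /\ J (subad g a (e2 k)) /\ J (subad g a (e3 k)).
Proof.
move=> hg.
have L11 := Lidem hg kQ_e1 kQ_e1 (_ : _ = e1 k).
have L22 := Lidem hg kQ_e2 kQ_e2 (_ : _ = e2 k).
have L33 := Lidem hg kQ_e3 kQ_e3 (_ : _ = e3 k).
have L12 := Lzero hg kQ_e1 kQ_e2.
have L13 := Lzero hg kQ_e1 kQ_e3.
have L23 := Lzero hg kQ_e2 kQ_e3.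
exists (g (e1 k) * e1 k + g (e2 k) * e2 k + g (e3 k) * e3 k).
have [F0 [F1 [F2 [F3 [F4 [F5 eF]]]]]] := kQ_M6 (g_kQ hg kQ_e1).
have [H0 [H1 [H2 [H3 [H4 [H5 eH]]]]]] := kQ_M6 (g_kQ hg kQ_e2).
have [K0 [K1 [K2 [K3 [K4 [K5 eK]]]]]] := kQ_M6 (g_kQ hg kQ_e3).
split.
  exact: (kQ_add (kQ_add (kQ_mul (g_kQ hg kQ_e1) kQ_e1) (kQ_mul (g_kQ hg kQ_e2) kQ_e2))
     (kQ_mul (g_kQ hg kQ_e3) kQ_e3)).
have {L11}L11 := L11 ltac:(by m6). have {L22}L22 := L22 ltac:(by m6).
have {L33}L33 := L33 ltac:(by m6). have {L12}L12 := L12 ltac:(by m6).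
have {L13}L13 := L13 ltac:(by m6). have {L23}L23 := L23 ltac:(by m6).
rewrite /subad eF eH eK; rewrite eF eH eK in L11 L22 L33 L12 L13 L23.
m6s_in L11; m6s_in L22; m6s_in L33; m6s_in L12; m6s_in L13; m6s_in L23; m6s.
case/J_M6: L11 => a11 f11 b11 c11 [d11 e11].
case/J_M6: L22 => a22 f22 b22 c22 [d22 e22].
case/J_M6: L33 => a33 f33 b33 c33 [d33 e33].
case/J_M6: L12 => a12 f12 b12 c12 [d12 e12].
case/J_M6: L13 => a13 f13 b13 c13 [d13 e13].
case/J_M6: L23 => a23 f23 b23 c23 [d23 e23].
have F0z : F0 = 0 by apply: (@eq0_by (-1) _ _ a11); ring.
have F5z : F5 = 0 by apply: (@eq0_by 1 _ _ f11); ring.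
have H0z : H0 = 0 by apply: (@eq0_by 1 _ _ a22); ring.
have H5z : H5 = 0 by apply: (@eq0_by 1 _ _ f22); ring.
have K0z : K0 = 0 by apply: (@eq0_by 1 _ _ a33); ring.
have K5z : K5 = 0 by apply: (@eq0_by (-1) _ _ f33); ring.
subst F0 F5 H0 H5 K0 K5.
split; [|split]; apply/J_M6; split; try split; close.
Qed.


Lemma Lleft g x y z : is_derivation_mod k J g -> in_kQ x -> in_kQ y -> x * y = z ->
  J (g x) -> J (g z - x * g y).
Proof.
move=> hg hx hy e hgx; have := Lidem hg hx hy e => h.
have -> : g z - x * g y = (g z - (g x * y + x * g y)) + g x * y by mxring.
by apply: JD h (JMr hgx hy).
Qed.

Lemma Lright g x y z : is_derivation_mod k J g -> in_kQ x -> in_kQ y -> x * y = z ->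
  J (g y) -> J (g z - g x * y).
Proof.
move=> hg hx hy e hgy; have := Lidem hg hx hy e => h.
have -> : g z - g x * y = (g z - (g x * y + x * g y)) + x * g y by mxring.
by apply: JD h (JMl hx hgy).
Qed.

Lemma stage_shape g : is_derivation_mod k J g -> J (g (e1 k)) -> J (g (e2 k)) -> J (g (e3 k)) ->
  (exists u, eqv (g (alpha k)) (alpha k * poly_beta u)) /\
  (exists w, eqv (g (beta k)) (poly_beta w)) /\
  (exists t, eqv (g (gamma k)) (poly_beta t * gamma k)).
Proof.
move=> hg h1 h2 h3.
have hA1 := Lleft hg kQ_e1 kQ_alpha (_ : _ = alpha k) h1.
have hA2 := Lright hg kQ_alpha kQ_e2 (_ : _ = alpha k) h2.
have hB1 := Lleft hg kQ_e2 kQ_beta (_ : _ = beta k) h2.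
have hB2 := Lright hg kQ_beta kQ_e2 (_ : _ = beta k) h2.
have hG1 := Lleft hg kQ_e2 kQ_gamma (_ : _ = gamma k) h2.
have hG2 := Lright hg kQ_gamma kQ_e3 (_ : _ = gamma k) h3.
have {hA1}hA1 := hA1 ltac:(by m6). have {hA2}hA2 := hA2 ltac:(by m6).
have {hB1}hB1 := hB1 ltac:(by m6). have {hB2}hB2 := hB2 ltac:(by m6).
have {hG1}hG1 := hG1 ltac:(by m6). have {hG2}hG2 := hG2 ltac:(by m6).
have [A0 [A1 [A2 [A3 [A4 [A5 eA]]]]]] := kQ_M6 (g_kQ hg kQ_alpha).
have [B0 [B1 [B2 [B3 [B4 [B5 eB]]]]]] := kQ_M6 (g_kQ hg kQ_beta).
have [G0 [G1 [G2 [G3 [G4 [G5 eG]]]]]] := kQ_M6 (g_kQ hg kQ_gamma).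
rewrite eA in hA1 hA2; rewrite eB in hB1 hB2; rewrite eG in hG1 hG2.
m6s_in hA1; m6s_in hA2; m6s_in hB1; m6s_in hB2; m6s_in hG1; m6s_in hG2.
case/J_M6: hA1 => a1 f1 b1 c1 [d1 e1'].
case/J_M6: hA2 => a2 f2 b2 c2 [d2 e2'].
case/J_M6: hB1 => a3 f3 b3 c3 [d3 e3'].
case/J_M6: hB2 => a4 f4 b4 c4 [d4 e4'].
case/J_M6: hG1 => a5 f5 b5 c5 [d5 e5'].
case/J_M6: hG2 => a6 f6 b6 c6 [d6 e6'].
split; [exists A1 | split; [exists B3 | exists G4]]; rewrite /eqv ?eA ?eB ?eG; m6s;
  apply/J_M6; split; try split; close.
Qed.
End S.


Section S.
Variable k : fieldType.
Implicit Types x y z a : Mx k.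
Variable p : nat.
Local Notation J := (J p).
Local Notation V := (V_sub k p).
Local Notation eqv := (eqv p).

Ltac m6s := rewrite ?addr0 ?add0r ?e1_M6 ?e2_M6 ?e3_M6 ?alpha_M6 ?beta_M6 ?gamma_M6 ?pb_M6 ?M6_1
   ?(M6_mul, M6_add, M6_opp, M6_scale).
Ltac m6s_in H := rewrite ?e1_M6 ?e2_M6 ?e3_M6 ?alpha_M6 ?beta_M6 ?gamma_M6 ?pb_M6 ?M6_1
   ?(M6_mul, M6_add, M6_opp, M6_scale) in H.
Ltac m6 := m6s; try rewrite [RHS](M6_0 k); f_equal; ring.

Section Der.
Variable g : Mx k -> Mx k.
Hypothesis hg : is_derivation_mod k J g.

Lemma Zadd x y : in_kQ x -> in_kQ y -> J (g x) -> J (g y) -> J (g (x + y)).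
Proof. move=> hx hy h1 h2; apply: (eqv_J (g_add hg hx hy)); exact: JD. Qed.
Lemma Zmul x y : in_kQ x -> in_kQ y -> J (g x) -> J (g y) -> J (g (x * y)).
Proof.
move=> hx hy h1 h2; apply: (eqv_J (g_mul hg hx hy)).
by apply: JD; [apply: JMr | apply: JMl].
Qed.
Lemma Zsc c x : in_kQ x -> J (g x) -> J (g (kscale c x)).
Proof. move=> hx h; apply: (eqv_J (g_sc hg c hx)); exact: JS. Qed.

Definition ZK y := in_kQ y /\ J (g y).
Lemma ZKadd y z : ZK y -> ZK z -> ZK (y + z).
Proof. by move=> [? ?] [? ?]; split; [apply: kQ_add | apply: Zadd]. Qed.
Lemma ZKmul y z : ZK y -> ZK z -> ZK (y * z).
Proof. by move=> [? ?] [? ?]; split; [apply: kQ_mul | apply: Zmul]. Qed.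
Lemma ZKsc c y : ZK y -> ZK (kscale c y).
Proof. by move=> [? ?]; split; [apply: kQ_scale | apply: Zsc]. Qed.

Hypothesis h2 : J (g (e2 k)).

Lemma gpb w : eqv (g (beta k)) (poly_beta w) ->
  forall v, eqv (g (poly_beta v)) (poly_beta (v^`() * w)).
Proof.
move=> hb; elim/poly_ind => [|q c IH].
  rewrite deriv0 mul0r (_ : poly_beta 0 = 0); last by m6.
  by apply/eqv0; apply: g0.
rewrite (_ : poly_beta (q * 'X + c%:P) = poly_beta q * beta k + kscale c (e2 k)); last by m6.
apply: (eqv_trans (g_add hg (kQ_mul (kQ_pb q) kQ_beta) (kQ_scale c kQ_e2))).
apply: (eqv_trans (y := poly_beta (q^`() * w) * beta k + poly_beta q * poly_beta w + 0)).
  apply: eqv_add.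
    apply: (eqv_trans (g_mul hg (kQ_pb q) kQ_beta)).
    by apply: eqv_add; [apply: eqv_mulr => //; exact: kQ_beta | apply: eqv_mull => //; exact: kQ_pb].
  apply: (eqv_trans (g_sc hg c kQ_e2)); apply/eqv0; exact: JS.
by apply: eqv_eq; rewrite derivMXaddC; m6.
Qed.

End Der.

Lemma der_zero g : is_derivation_mod k J g -> J (g (e1 k)) -> J (g (e2 k)) -> J (g (e3 k)) ->
  J (g (alpha k)) -> J (g (beta k)) -> J (g (gamma k)) -> forall x, in_kQ x -> J (g x).
Proof.
move=> hg h1 h2 h3 ha hb hc.
have pb0 : poly_beta 0 = 0 :> Mx k by m6.
have hb0 : eqv (g (beta k)) (poly_beta 0) by rewrite pb0; apply/eqv0.
have hpb : forall v, J (g (poly_beta v)).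
  by move=> v; have := gpb hg h2 hb0 v; rewrite mulr0 pb0 => /eqv0.
move=> x hx; rewrite (kQ_decomp hx).
have Z1 : ZK g (e1 k) by split => //; exact: kQ_e1.
have Z3 : ZK g (e3 k) by split => //; exact: kQ_e3.
have Za : ZK g (alpha k) by split => //; exact: kQ_alpha.
have Zc : ZK g (gamma k) by split => //; exact: kQ_gamma.
have Zp : forall v, ZK g (poly_beta v) by move=> v; split => //; exact: kQ_pb.
suff : ZK g (kscale (x v1 v1)`_0 (e1 k) + alpha k * poly_beta (x v1 v2) +
        alpha k * poly_beta (x v1 v3) * gamma k + 
        poly_beta (x v2 v2) + poly_beta (x v2 v3) * gamma k +
        kscale (x v3 v3)`_0 (e3 k)) by case.
repeat apply: (ZKadd hg); try apply: (ZKsc hg); repeat apply: (ZKmul hg); auto.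
Qed.


Lemma deep_struct g u w : is_derivation_mod k J g -> J (g (e2 k)) -> J (g (gamma k)) ->
  eqv (g (alpha k)) (alpha k * poly_beta u) -> eqv (g (beta k)) (poly_beta w) ->
  forall v, V v -> V (u * v + v^`() * w).
Proof.
move=> hg h2 hc ha hb v hv.
have kapv : in_kQ (alpha k * poly_beta v) by apply: kQ_mul; [exact: kQ_alpha | exact: kQ_pb].
have e : eqv (g (alpha k * poly_beta v * gamma k)) (alpha k * poly_beta (u * v + v^`() * w) * gamma k).
  apply: (eqv_trans (g_mul hg kapv kQ_gamma)).
  apply: (eqv_trans (y := (alpha k * poly_beta u * poly_beta v + alpha k * poly_beta (v^`() * w)) * gamma k
     + alpha k * poly_beta v * 0)).
    apply: eqv_add.
      apply: eqv_mulr; first exact: kQ_gamma.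
      apply: (eqv_trans (g_mul hg kQ_alpha (kQ_pb v))).
      apply: eqv_add; first by apply: eqv_mulr => //; exact: kQ_pb.
      by apply: eqv_mull; [exact: kQ_alpha | exact: gpb].
    by apply: eqv_mull => //; apply/eqv0.
  by apply: eqv_eq; rewrite mulr0; m6.
have hJ : J (alpha k * poly_beta v * gamma k).
  rewrite (_ : alpha k * poly_beta v * gamma k = M6 0 0 v 0 0 0); last by m6.
  by apply: J_M6'; [exact: dvn0 | exact: hv | exact: dvn0 | exact: dvn0].
have := J_eqv (g_J hg (kQ_mul kapv kQ_gamma) hJ) e.
rewrite (_ : alpha k * poly_beta (u * v + v^`() * w) * gamma k = M6 0 0 (u * v + v^`() * w) 0 0 0); last by m6.
by case/J_M6.
Qed.

End S.

Ltac bdec := repeat match goal with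
 | |- context [ @eq_op Datatypes_nat__canonical__eqtype_Equality ?a ?b ] =>
     first [ rewrite (_ : (a == b) = true); last by apply/eqP; lia
           | rewrite (_ : (a == b) = false); last by apply/negbTE/eqP; lia ]
 | |- context [ (?a <= ?b)%N ] =>
     first [ rewrite (_ : (a <= b)%N = true); last by lia
           | rewrite (_ : (a <= b)%N = false); last by apply/negbTE; lia ]
 end.

Section S.
Variable k : fieldType.
Variable p : nat.
Hypothesis p2 : (2 <= p)%N.
Local Notation V := (V_sub k p).

Lemma Vco s : V s -> exists q c1 c2 c3,
  s = 'X^(6 * p + 1) * q + c1%:P + c2%:P * ('X + 'X^2) + c3%:P * 'X^(2 * p + 1) /\
  forall j, (j < 6 * p + 1)%N -> s`_j =
    (j == 0)%:R * c1 + ((j == 1)%:R + (j == 2)%:R) * c2 + (j == 2 * p + 1)%:R * c3.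
Proof.
move=> /V_E [q [c1 [c2 [c3 e]]]]; exists q, c1, c2, c3; split => // j hj.
rewrite e !coefD coefXnM !coefCM coefD coefX !coefXn coefC hj.
case: (j == 0) => /=; ring.
Qed.


Lemma solve (c a b G H : k) : a = b -> G - H = c * (a - b) -> G = H.
Proof. by move=> -> e; apply/eqP; rewrite -subr_eq0 e subrr mulr0. Qed.
Lemma solve2 (c c' a b a' b' G H : k) : a = b -> a' = b' -> G - H = c * (a - b) + c' * (a' - b') -> G = H.
Proof. by move=> -> -> e; apply/eqP; rewrite -subr_eq0 e !subrr !mulr0 addr0. Qed.

Arguments solve c {a b G H}.
Arguments solve2 c c' {a b a' b' G H}.

Hypothesis hp0 : (p%:R : k) = 0.

Lemma natchar (a : k) : a *+ (2 * p + 1) = a.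
Proof. by rewrite -mulr_natr natrD natrM hp0 mulr0 add0r mulr1. Qed.

Lemma coef_analysis (u w : {poly k}) : V u ->
  V (u * ('X + 'X^2) + ('X + 'X^2)^`() * w) -> V (u * 'X^(2 * p + 1) + ('X^(2 * p + 1))^`() * w) ->
  dvn p w /\ exists c q, u = c%:P + 'X^(6 * p + 1) * q.
Proof.
move=> hu hc hd.
have [q [c0 [c1 [c3 [ue uc]]]]] := Vco hu.
have [_ [e1 [e2 [e3 [_ cc]]]]] := Vco hc.
have [_ [d1 [d2 [d3 [_ dc]]]]] := Vco hd.
have sc : forall j, (u * ('X + 'X^2) + ('X + 'X^2)^`() * w)`_j =
   (if j == 0 then 0 else u`_j.-1) + (if (j < 2)%N then 0 else u`_(j - 2)) +
   (w`_j + (if j == 0 then 0 else w`_j.-1) *+ 2).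
  move=> j; rewrite derivD derivX derivXn /= expr1 mulrDr mulrDl mul1r !coefD coefMX coefMXn.
  by rewrite mulrnAl coefMn coefXM.
have sd : forall j, (u * 'X^(2 * p + 1) + ('X^(2 * p + 1))^`() * w)`_j =
   (if (j < 2 * p + 1)%N then 0 else u`_(j - (2 * p + 1))) +
   (if (j < 2 * p)%N then 0 else w`_(j - 2 * p)).
  move=> j; rewrite derivXn (_ : ((2 * p + 1).-1 = 2 * p)%N); last by rewrite addn1.
  by rewrite mulrnAl coefD coefMXn coefMn coefXnM natchar.
have u0 : u`_0 = c0 by rewrite uc; [bdec => /=; ring | lia].
have u1 : u`_1 = c1 by rewrite uc; [bdec => /=; ring | lia].
have u2 : u`_2 = c1 by rewrite uc; [bdec => /=; ring | lia].
have u2p1 : u`_(2 * p + 1) = c3 by rewrite uc; [bdec => /=; ring | lia].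
have u2p2 : u`_(2 * p + 2) = 0 by rewrite uc; [bdec => /=; ring | lia].
have D1 : w`_0 = 0.
  have := dc (2 * p) ltac:(lia); rewrite sd; bdec; rewrite subnn /= => E.
  by apply: (solve 1 E); ring.
have D2 : forall m, (1 <= m)%N -> (m <= 4 * p - 1)%N -> u`_m + w`_(m.+1) = 0.
  move=> m h1 h2; have := dc (2 * p + 1 + m) ltac:(lia); rewrite sd; bdec.
  rewrite addKn (_ : (2 * p + 1 + m - 2 * p = m.+1)%N); last lia.
  move=> /= E; by apply: (solve 1 E); ring.
have C1 : u`_0 + (w`_1 + w`_0 *+ 2) = e2.
  by have := cc 1%N ltac:(lia); rewrite sc; bdec => /= E; apply: (solve 1 E); ring.
have C2 : u`_1 + u`_0 + (w`_2 + w`_1 *+ 2) = e2.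
  by have := cc 2%N ltac:(lia); rewrite sc; bdec => /= E; apply: (solve 1 E); ring.
have C3 : u`_2 + u`_1 + (w`_3 + w`_2 *+ 2) = 0.
  by have := cc 3%N ltac:(lia); rewrite sc; bdec => /= E; apply: (solve 1 E); ring.
have C4 : u`_(2 * p + 2) + u`_(2 * p + 1) + (w`_(2 * p + 3) + w`_(2 * p + 2) *+ 2) = 0.
  have := cc (2 * p + 3) ltac:(lia); rewrite sc; bdec.
  rewrite (_ : ((2 * p + 3).-1 = 2 * p + 2)%N); last lia.
  rewrite (_ : ((2 * p + 3) - 2 = 2 * p + 1)%N); last lia.
  by move=> /= E; apply: (solve 1 E); ring.
have C5 : forall j, (4 * p + 1 <= j)%N -> (j < 6 * p + 1)%N ->
    u`_j.-1 + u`_(j - 2) + (w`_j + w`_j.-1 *+ 2) = 0.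
  move=> j h1 h2; have := cc j h2; rewrite sc; bdec.
  by move=> /= E; apply: (solve 1 E); ring.
have w2e : w`_2 = - c1.
  have E := D2 1%N ltac:(lia) ltac:(lia); rewrite u1 in E; by apply: (solve 1 E); ring.
have w3e : w`_3 = - c1.
  have E := D2 2%N ltac:(lia) ltac:(lia); rewrite u2 in E; by apply: (solve 1 E); ring.
have w1z : w`_1 = 0.
  rewrite u0 D1 in C1; rewrite u1 u0 w2e in C2.
  by apply: (solve2 1 (-1) C2 C1); ring.
have c1z : c1 = 0.
  rewrite u2 u1 w3e w2e in C3; by apply: (solve (-1) C3); ring.
have w2p2 : w`_(2 * p + 2) = - c3.
  have E := D2 (2 * p + 1)%N ltac:(lia) ltac:(lia).
  rewrite u2p1 (_ : (2 * p + 1).+1 = 2 * p + 2)%N in E; last lia.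
  by apply: (solve 1 E); ring.
have w2p3 : w`_(2 * p + 3) = 0.
  have E := D2 (2 * p + 2)%N ltac:(lia) ltac:(lia).
  rewrite u2p2 (_ : (2 * p + 2).+1 = 2 * p + 3)%N in E; last lia.
  by apply: (solve 1 E); ring.
have c3z : c3 = 0.
  rewrite u2p2 u2p1 w2p3 w2p2 in C4; by apply: (solve (-1) C4); ring.
have uz : forall m, (1 <= m)%N -> (m < 6 * p + 1)%N -> u`_m = 0.
  move=> m h1 h2; rewrite uc // c1z c3z; bdec => /=; ring.
have wz : forall j, (j < 6 * p + 1)%N -> w`_j = 0.
  elim=> [|j IH] hj; first exact: D1.
  case: (ltnP j 1) => hj1.
    by rewrite (_ : j = 0)%N; [exact: w1z | lia].
  case: (ltnP j (4 * p)) => hj2.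
    have E := D2 j ltac:(lia) ltac:(lia); rewrite uz in E; try lia.
    by apply: (solve 1 E); ring.
  have E := C5 j.+1 ltac:(lia) hj; rewrite /= IH in E; last lia.
  rewrite !uz in E; try lia.
  by apply: (solve 1 E); ring.
split.
  exists (drop_poly (6 * p + 1) w).
  rewrite -{1}(poly_take_drop (6 * p + 1) w) mulrC.
  rewrite (_ : take_poly (6 * p + 1) w = 0) ?add0r //.
  apply/polyP => j; rewrite coef_take_poly coef0.
  by case: ifP => // hj; apply: wz.
exists c0, q; rewrite ue c1z c3z !polyC0; ring.
Qed.

End S.


Section S.
Variable k : fieldType.
Variable p : nat.
Hypothesis p2 : (2 <= p)%N.
Hypothesis hp0 : (p%:R : k) = 0.
Local Notation J := (J p).
Local Notation V := (V_sub k p).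
Local Notation eqv := (eqv p).

Ltac m6s := rewrite ?addr0 ?add0r ?e1_M6 ?e2_M6 ?e3_M6 ?alpha_M6 ?beta_M6 ?gamma_M6 ?pb_M6 ?M6_1
   ?(M6_mul, M6_add, M6_opp, M6_scale).
Ltac m6 := m6s; try rewrite [RHS](M6_0 k); f_equal; ring.

Lemma HH1_J f : is_derivation_mod k J f -> exists a, in_kQ a /\ forall x, in_kQ x -> J (f x - (a * x - x * a)).
Proof.
move=> hf.
have [a1 [ka1 [h1 [h2 h3]]]] := stage1 hf.
pose g1 := subad f a1.
have hg1 : is_derivation_mod k J g1 := subad_der hf ka1.
have [[u hu] [[w hw] [t ht]]] := stage_shape hg1 h1 h2 h3.
pose g2 := subad g1 (poly_beta t).
have hg2 : is_derivation_mod k J g2 := subad_der hg1 (kQ_pb t).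
have g2e2 : J (g2 (e2 k)).
  rewrite /g2 /subad (_ : poly_beta t * e2 k - e2 k * poly_beta t = 0) ?subr0 //; m6.
have g2c : J (g2 (gamma k)).
  by rewrite /g2 /subad (_ : poly_beta t * gamma k - gamma k * poly_beta t = poly_beta t * gamma k); last m6.
have g2a : eqv (g2 (alpha k)) (alpha k * poly_beta (u + t)).
  rewrite /g2 /subad /eqv (_ : poly_beta t * alpha k - alpha k * poly_beta t = - (alpha k * poly_beta t)); last m6.
  rewrite (_ : g1 (alpha k) - - (alpha k * poly_beta t) - alpha k * poly_beta (u + t) =
     g1 (alpha k) - alpha k * poly_beta u + (alpha k * poly_beta u + alpha k * poly_beta t - alpha k * poly_beta (u + t))).
    by rewrite (_ : alpha k * poly_beta u + alpha k * poly_beta t - alpha k * poly_beta (u + t) = 0) ?addr0 //; m6.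
  mxring.
have g2b : eqv (g2 (beta k)) (poly_beta w).
  by rewrite /g2 /subad (_ : poly_beta t * beta k - beta k * poly_beta t = 0) ?subr0 //; m6.
have hd := deep_struct hg2 g2e2 g2c g2a g2b.
have V1' := hd 1 V1; rewrite derivC mul0r addr0 mulr1 in V1'.
have [wd [c [q euq]]] := coef_analysis p2 hp0 V1' (hd _ VXX) (hd _ VX2p).
pose b := poly_beta t + kscale c (e1 k).
have kb : in_kQ b by apply: kQ_add; [exact: kQ_pb | apply: kQ_scale; exact: kQ_e1].
exists (a1 + b); split; first exact: kQ_add.
pose h := subad f (a1 + b).
have hh : is_derivation_mod k J h := subad_der hf (kQ_add ka1 kb).
have hE : forall x, h x = g1 x - (b * x - x * b) by move=> x; rewrite /h -subad_comp.
apply: (der_zero hh); rewrite hE.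
- by rewrite (_ : b * e1 k - e1 k * b = 0) ?subr0 //; rewrite /b; m6.
- by rewrite (_ : b * e2 k - e2 k * b = 0) ?subr0 //; rewrite /b; m6.
- by rewrite (_ : b * e3 k - e3 k * b = 0) ?subr0 //; rewrite /b; m6.
- rewrite (_ : b * alpha k - alpha k * b = alpha k * poly_beta (c%:P - t)); last by rewrite /b; m6.
  rewrite (_ : g1 (alpha k) - alpha k * poly_beta (c%:P - t) = (g1 (alpha k) - alpha k * poly_beta u) +
     M6 0 (u + t - c%:P) 0 0 0 0); last first.
    have -> : M6 0 (u + t - c%:P) 0 0 0 0 = alpha k * poly_beta u - alpha k * poly_beta (c%:P - t) by m6.
    by move: (g1 (alpha k)) (alpha k * poly_beta u) (alpha k * poly_beta (c%:P - t)) => X Z Y; mxring.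
  apply: JD; first exact: hu.
  apply: J_M6'; [|exact: V0|exact: dvn0|exact: dvn0].
  by rewrite euq; apply: (dvn_eq (dvnX q)); ring.
- rewrite (_ : b * beta k - beta k * b = 0) ?subr0; last by rewrite /b; m6.
  apply: (eqv_J hw); rewrite pb_M6; apply: J_M6'; [exact: dvn0|exact: V0|exact: wd|exact: dvn0].
- by rewrite (_ : b * gamma k - gamma k * b = poly_beta t * gamma k); last by rewrite /b; m6.
Qed.

End S.

Theorem mainTheorem19 (k : fieldType) (p : nat) (hp : p \in [pchar k]) :
  (forall x : Mx k, Lam_ideal k p x <-> I_nnnV k (6 * p + 1) (V_sub k p) x) /\
  admissible k (Lam_ideal k p) /\
  HH1_vanishes k (Lam_ideal k p).
Proof.
have p2 : (2 <= p)%N := prime_gt1 (pcharf_prime hp).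
have hp0 : (p%:R : k) = 0 := pcharf0 hp.
have p1 : (1 <= p)%N by lia.
have LJ : forall x : Mx k, Lam_ideal k p x <-> J p x := Lam_J p.
have IJ : forall x : Mx k, I_nnnV k (6 * p + 1) (V_sub k p) x <-> J p x := I_J p.
split.
  by move=> x; split => h; [apply/IJ; apply/LJ | apply/LJ; apply/IJ].
split.
  split; first by move=> x /LJ hx; exact: (J_R2 p1 hx).
  exists (6 * p + 3)%N; split; first lia.
  by move=> x /(R_J p1) hx; apply/LJ.
have EJ : Lam_ideal k p = J p.
  by apply: functional_extensionality => x; apply: propositional_extensionality; exact: LJ.
rewrite EJ => f hf.
have [a [ka ha]] := HH1_J p2 hp0 hf.
by exists a; split.
Qed.
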